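(* Let $n\ge 2$ and let $F_1,\ldots,F_n$ be finite fields with $|F_1|\le\cdots\le|F_n|$. Suppose that one of the following holds: (i) $F_1$ has characteristic $2$; (ii) every $F_i$ has odd characteristic and $F_1\times F_2\not\cong \mathbb{Z}_3\times\mathbb{Z}_3$. Then $\chi\big(T(\Gamma(F_1\times\cdots\times F_n))\big)=|F_2|\cdots|F_n|$.
   Context: For a commutative ring $R$ with identity, $Z(R)$ is its set of zero-divisors (including $0$), and the total graph $T(\Gamma(R))$ is the simple graph with vertex set $R$ in which distinct $x,y$ are adjacent iff $x+y\in Z(R)$. $\chi$ denotes the chromatic number. *)

(* Defs.v *)
From HB Require Import structures.
From mathcomp Require Import all_boot all_order all_algebra all_field.
Set Implicit Arguments. Unset Strict Implicit. Unset Printing Implicit Defensive.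
Import GRing.Theory.
Local Open Scope ring_scope.

Section ProdRing.
Variables (n : nat) (F : 'I_n -> finFieldType).

Definition prodR := {dffun forall i : 'I_n, F i}.

Definition prod_zero : prodR := [ffun i => 0].
Definition prod_add (x y : prodR) : prodR := [ffun i => x i + y i].
Definition prod_mul (x y : prodR) : prodR := [ffun i => x i * y i].

Definition zero_divisor (x : prodR) : bool :=
  [exists z : prodR, (z != prod_zero) && (prod_mul x z == prod_zero)].

Definition total_adj (x y : prodR) : bool :=
  (x != y) && zero_divisor (prod_add x y).
End ProdRing.

Section Chromatic.
Variables (V : finType) (adj : rel V).

Definition colorable (k : nat) : bool :=
  [exists c : {ffun V -> 'I_k}, [forall x, forall y, adj x y ==> (c x != c y)]].
End Chromatic.

Lemma colorable_card (V : finType) (adj : rel V) :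
  (forall x y, adj x y -> x != y) -> colorable adj #|V|.
Proof.
move=> H; apply/existsP; exists [ffun x => enum_rank x].
apply/forallP=> x; apply/forallP=> y; apply/implyP=> /H.
by rewrite !ffunE; apply: contra => /eqP /enum_rank_inj ->.
Qed.

Lemma total_adj_neq n (F : 'I_n -> finFieldType) (x y : prodR F) :
  total_adj x y -> x != y.
Proof. by case/andP. Qed.

Lemma total_colorable n (F : 'I_n -> finFieldType) :
  exists k, colorable (@total_adj n F) k.
Proof. by exists #|prodR F|; apply: colorable_card; exact: total_adj_neq. Qed.

Definition chi_total n (F : 'I_n -> finFieldType) : nat :=
  ex_minn (total_colorable F).

(* Main.v *)
Require Import Defs.
From HB Require Import structures.
From mathcomp Require Import all_boot all_order all_algebra all_field.
From mathcomp Require Import zify.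
From mathcomp Require Import cyclic.
Set Implicit Arguments. Unset Strict Implicit. Unset Printing Implicit Defensive.
Import GRing.Theory.
Local Open Scope ring_scope.
Section Basic.
Variables (n : nat) (F : 'I_n -> finFieldType).

Lemma zdP (x : prodR F) : zero_divisor x = [exists i, x i == 0].
Proof.
apply/existsP/existsP => [[z /andP[nz /eqP xz]] | [i /eqP xi]].
- have [i zi] : exists i, z i != 0.
    apply/existsP; apply: contraNT nz => /existsPn H.
    by apply/eqP/ffunP => i; rewrite ffunE; apply/eqP/negPn/H.
  exists i; have := congr1 (fun f : prodR F => f i) xz; rewrite !ffunE => /eqP.
  by rewrite mulf_eq0 (negbTE zi) orbF.
- exists [ffun j => if j == i then 1 else 0].
  apply/andP; split.
    apply/eqP => /(congr1 (fun f : prodR F => f i)); rewrite !ffunE eqxx => /eqP.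
    by rewrite oner_eq0.
  apply/eqP/ffunP => j; rewrite !ffunE; case: eqP => [->|_].
    by rewrite xi mul0r.
  by rewrite mulr0.
Qed.

Lemma adj_iff (x y : prodR F) :
  total_adj x y = (x != y) && [exists i, x i + y i == 0].
Proof.
rewrite /total_adj zdP; congr (_ && _); apply: eq_existsb => i.
by rewrite ffunE.
Qed.

End Basic.
Section Bounds.
Variables (n : nat) (F : 'I_n -> finFieldType) (i0 : 'I_n).

Definition Sset := [set x : prodR F | x i0 == 0].

Lemma card_Sset : #|Sset| = (\prod_(i < n | i != i0) #|F i|)%N.
Proof.
pose G := fun i : 'I_n => if i == i0 then (pred1 0 : pred (F i)) else predT.
have -> : #|Sset| = #|(family G : simpl_pred (prodR F))|.
  apply: eq_card => x; rewrite inE; apply/eqP/familyP => [x0 i | H].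
    by rewrite /G; case: eqP => [->|_] //=; rewrite inE x0.
  by have := H i0; rewrite /G eqxx inE => /eqP.
rewrite card_family foldrE big_map big_enum /= [RHS]big_mkcond.
apply: eq_bigr => i _; rewrite /G; case: (i =P i0) => [->|ne] /=.
  exact: card1.
exact: eq_card.
Qed.

Lemma S0 : prod_zero F \in Sset.
Proof. by rewrite inE ffunE. Qed.

Lemma chi_lower k : colorable (@total_adj n F) k -> (#|Sset| <= k)%N.
Proof.
case/existsP => c /forallP Hc.
rewrite -[k]card_ord -(card_in_imset (f := c)); first exact: max_card.
move=> x y; rewrite !inE => /eqP x0 /eqP y0 cxy; apply/eqP; apply: contraT => nxy.
have := Hc x => /forallP/(_ y); rewrite adj_iff nxy /=.
have -> : [exists i, x i + y i == 0] by apply/existsP; exists i0; rewrite x0 y0 addr0.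
by rewrite cxy eqxx.
Qed.

Lemma chi_upper (col : prodR F -> prodR F) :
  (forall x, col x \in Sset) ->
  (forall x y, col x = col y -> x != y -> forall i, x i + y i != 0) ->
  colorable (@total_adj n F) #|Sset|.
Proof.
move=> colS colP; apply/existsP; exists [ffun x => enum_rank_in S0 (col x)].
apply/forallP => x; apply/forallP => y; apply/implyP; rewrite adj_iff.
case/andP => nxy /existsP [i /eqP sxy]; rewrite !ffunE; apply/negP => /eqP E.
have : col x = col y.
  by rewrite -(enum_rankK_in S0 (colS x)) -(enum_rankK_in S0 (colS y)) E.
by move/colP/(_ nxy i); rewrite sxy eqxx.
Qed.

Lemma chi_eq (col : prodR F -> prodR F) :
  (forall x, col x \in Sset) ->
  (forall x y, col x = col y -> x != y -> forall i, x i + y i != 0) ->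
  chi_total F = #|Sset|.
Proof.
move=> colS colP; rewrite /chi_total; case: ex_minnP => m Hm Hmin.
apply/eqP; rewrite eqn_leq Hmin ?chi_lower //; exact: chi_upper colS colP.
Qed.

End Bounds.
Section Combine.
Variables (n : nat) (F : 'I_n -> finFieldType) (i0 i1 : 'I_n) (ne01 : i0 != i1).
Variables (I : finType) (c : F i0 -> F i1 -> F i1) (iota : F i0 -> F i1 -> I).
Variable (g : forall i, I -> F i -> F i).
Hypothesis Hc : forall a b a' b', c a b = c a' b' -> (a, b) != (a', b') ->
  [/\ a + a' != 0, b + b' != 0 & iota a b != iota a' b'].
Hypothesis Hg : forall i : 'I_n, i != i0 -> i != i1 ->
  (forall k : I, injective (@g i k)) /\
  (forall k k' u u', k != k' -> @g i k u = @g i k' u' -> u + u' != 0).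

Definition colC (x : prodR F) : prodR F :=
  [ffun i => dfwith (T := fun i => F i)
     (dfwith (T := fun i => F i) (fun i => @g i (iota (x i0) (x i1)) (x i))
        (c (x i0) (x i1)) ) (0 : F i0) i].

Lemma colC0 x : colC x i0 = 0.
Proof. by rewrite ffunE dfwith_in. Qed.

Lemma colC1 x : colC x i1 = c (x i0) (x i1).
Proof. by rewrite ffunE dfwith_out // dfwith_in. Qed.

Lemma colCo x i : i != i0 -> i != i1 -> colC x i = @g i (iota (x i0) (x i1)) (x i).
Proof.
by move=> h0 h1; rewrite ffunE dfwith_out 1?eq_sym // dfwith_out // eq_sym.
Qed.

Lemma chi_combine : chi_total F = #|Sset F i0|.
Proof.
apply: (chi_eq (col := colC)) => [x|x y Exy nxy i]; first by rewrite inE colC0.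
have E1 : c (x i0) (x i1) = c (y i0) (y i1) by rewrite -!colC1 Exy.
have Eo i' : i' != i0 -> i' != i1 ->
    @g i' (iota (x i0) (x i1)) (x i') = @g i' (iota (y i0) (y i1)) (y i').
  by move=> h0 h1; rewrite -!colCo // Exy.
have [Ep | Np] := eqVneq (x i0, x i1) (y i0, y i1).
  case: Ep => e0 e1; case/negP: nxy; apply/eqP/ffunP => j.
  have [->|h0] := eqVneq j i0; first by [].
  have [->|h1] := eqVneq j i1; first by [].
  have := Eo j h0 h1; rewrite e0 e1; apply: (proj1 (Hg h0 h1)).
have [s0 s1 si] := Hc E1 Np.
have [->|h0] := eqVneq i i0; first by [].
have [->|h1] := eqVneq i i1; first by [].
exact: (proj2 (Hg h0 h1)) si (Eo i h0 h1).
Qed.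

End Combine.
Definition famP (F : finFieldType) (I : finType) (g : I -> F -> F) :=
  (forall k, injective (g k)) /\
  (forall k k' u u', k != k' -> g k u = g k' u' -> u + u' != 0).

Lemma inj_ord_fin (I : finType) (F : finType) : (#|I| <= #|F|)%N ->
  exists e : I -> F, injective e.
Proof.
move=> H; exists (fun k => enum_val (widen_ord H (enum_rank k))).
move=> k k' /enum_val_inj /(congr1 val) /= /val_inj /enum_rank_inj; exact.
Qed.

Lemma fam_char2 (F : finFieldType) (I : finType) :
  2 \in [pchar F] -> (#|I| <= #|F|)%N -> exists g : I -> F -> F, famP g.
Proof.
move=> c2 H; have [e einj] := inj_ord_fin H.
exists (fun k u => u + e k); split.
  by move=> k u v /(congr1 (fun t => t - e k)); rewrite !addrK.
move=> k k' u u' nk E; apply/negP => /eqP s.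
have uu : u' = u by rewrite -[u](oppr_pchar2 c2); apply/eqP; rewrite -addr_eq0 addrC s.
by move: E; rewrite uu => /addrI /einj /eqP; rewrite (negbTE nk).
Qed.

Lemma double_eq0 (F : finFieldType) (x : F) : 2 \notin [pchar F] -> x + x = 0 -> x = 0.
Proof.
move=> c2 /eqP; rewrite -mulr2n -mulr_natl mulf_eq0 => /orP[h|/eqP //].
by case/negP: c2; rewrite inE h.
Qed.

Definition step (k j : nat) : nat :=
  if (j < k)%N then j.+1 else if j == k then 0%N else j.

Lemma step_lt K k j : (k < K)%N -> (j < K)%N -> (step k j < K)%N.
Proof. move=> h1 h2; rewrite /step; case: (ltngtP j k) => //= h; lia. Qed.

Lemma step_inj k j j' : step k j = step k j' -> j = j'.
Proof. rewrite /step; case: (ltngtP j k); case: (ltngtP j' k) => //=; lia. Qed.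

Lemma step_cases k k' j : k != k' ->
  let s := step k j in let s' := step k' j in
  [\/ (s = s' /\ (0 < s)%N), (s = 0%N /\ (0 < s')%N), (s' = 0%N /\ (0 < s)%N) |
      ((0 < j)%N /\ ((s = j /\ s' = j.+1) \/ (s = j.+1 /\ s' = j)))].
Proof.
move=> /eqP nk /=; rewrite /step.
case: (ltngtP j k) => h1; case: (ltngtP j k') => h2 /=;
  first [ by apply: Or41; lia | by apply: Or42; lia | by apply: Or43; lia
        | by apply: Or44; lia | lia ].
Qed.

Section Chain.
Variables (F : finFieldType) (K : nat) (c : nat -> F).
Hypotheses (c0 : c 0%N = 0)
  (C1 : forall j j', (j < K)%N -> (j' < K)%N -> c j = c j' -> j = j')
  (C2 : forall j, (0 < j)%N -> (j < K)%N -> c j != 0)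
  (C3 : forall j, (0 < j)%N -> (j.+1 < K)%N -> c j + c j.+1 != 0)
  (odd2 : 2 \notin [pchar F]).

Definition pos (z : F) : option 'I_K := [pick j : 'I_K | c j == z].

Lemma posSome z j : pos z = Some j -> c j = z.
Proof. by rewrite /pos; case: pickP => // j' /eqP h [<-]. Qed.

Lemma posNone z : pos z = None -> forall j, (j < K)%N -> c j != z.
Proof.
rewrite /pos; case: pickP => // h _ j jK.
by have := h (Ordinal jK) => /= ->.
Qed.

Definition sig (k : nat) (z : F) : F :=
  if pos z is Some j then c (step k j) else z.

Lemma sig_inj k : (k < K)%N -> injective (sig k).
Proof.
move=> kK z z'; rewrite /sig.
case e: (pos z) => [j|]; case e': (pos z') => [j'|].
- move/C1 => h; rewrite -(posSome e) -(posSome e').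
  by rewrite (step_inj (h (step_lt kK (ltn_ord j)) (step_lt kK (ltn_ord j')))).
- move=> E; have := posNone e' (step_lt kK (ltn_ord j)); by rewrite E eqxx.
- move=> E; have := posNone e (step_lt kK (ltn_ord j')); by rewrite E eqxx.
- by [].
Qed.

Lemma sig_row k k' z : (k < K)%N -> (k' < K)%N -> k != k' -> sig k z + sig k' z != 0.
Proof.
move=> kK k'K nk; rewrite /sig; case e: (pos z) => [j|]; last first.
  apply/negP => /eqP /(double_eq0 odd2) z0.
  by have := posNone e (j:=0%N) (leq_ltn_trans (leq0n k) kK); by rewrite c0 z0 eqxx.
have jK := ltn_ord j.
have sK := step_lt kK jK; have s'K := step_lt k'K jK.
case: (step_cases j nk) => [[E h]|[E h]|[E h]|[h [[E1 E2]|[E1 E2]]]].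
- rewrite E; apply/negP => /eqP /(double_eq0 odd2) /eqP; apply/negP.
  by apply: C2 => //; rewrite -E.
- by rewrite E c0 add0r; apply: C2 h _.
- by rewrite E c0 addr0; apply: C2 h _.
- by rewrite E1 E2; apply: C3 h _; rewrite -E2.
- by rewrite E1 E2 addrC; apply: C3 h _; rewrite -E1.
Qed.

End Chain.
Lemma mod_eq_small N j j' : (0 < j <= N)%N -> (0 < j' <= N)%N ->
  (j = j' %[mod N])%N -> j = j'.
Proof.
move=> /andP[j0 jN] /andP[j'0 j'N].
have key m : (0 < m <= N)%N -> (m %% N = if m == N then 0 else m)%N.
  move=> /andP[m0 mN]; case: eqP => [->|ne]; first by rewrite modnn.
  by rewrite modn_small //; rewrite ltn_neqAle mN andbT; apply/eqP.
rewrite key ?j0 ?jN // key ?j'0 ?j'N //.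
case: eqP => [->|ne1]; case: eqP => [->|ne2] //; lia.
Qed.

Lemma chain_exists (F : finFieldType) K : 2 \notin [pchar F] ->
  (K <= #|F|)%N -> ((K <= 2)%N \/ (5 <= #|F|)%N) ->
  exists c : nat -> F, [/\ c 0%N = 0,
    (forall j j', (j < K)%N -> (j' < K)%N -> c j = c j' -> j = j'),
    (forall j, (0 < j)%N -> (j < K)%N -> c j != 0) &
    (forall j, (0 < j)%N -> (j.+1 < K)%N -> c j + c j.+1 != 0)].
Proof.
move=> odd2 KF [K2|F5].
  exists (fun j => if j == 0%N then 0 else 1); split => //.
  - move=> j j' jK j'K; case: eqP => [->|h1]; case: eqP => [->|h2] //.
    + by move/eqP; rewrite eq_sym oner_eq0.
    + by move/eqP; rewrite oner_eq0.
    + move=> _; lia.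
  - by move=> j j0 jK; case: (j =P 0%N) => [E|_]; [move: j0; rewrite E | rewrite oner_eq0].
  - lia.
set N := #|F|.-1.
have NF : #|F| = N.+1 by rewrite /N prednK //; lia.
have N0 : (0 < N)%N by lia.
pose rs := enum [pred x : F | x != 0].
have : has N.-primitive_root rs.
  apply: has_prim_root => //.
  - apply/allP => x; rewrite mem_enum inE => x0; rewrite unity_rootE.
    have := expf_card x; rewrite NF exprS => E.
    by apply/eqP; apply: (mulfI x0); rewrite mulr1 E.
  - exact: enum_uniq.
  - by rewrite -cardE (cardC1 (0 : F)) NF.
case/hasP => w _ pw.
have w0 : w != 0.
  apply/negP => /eqP w0; have := prim_expr_order pw; rewrite w0 expr0n.
  by case: eqP => [N00|_]; [lia | move/eqP; rewrite eq_sym oner_eq0].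
exists (fun j => if j == 0%N then 0 else w ^+ j); split => //.
- move=> j j' jK j'K; case: eqP => [->|j0]; case: eqP => [->|j'0] //.
  + by move/eqP; rewrite eq_sym expf_eq0 (negbTE w0) andbF.
  + by move/eqP; rewrite expf_eq0 (negbTE w0) andbF.
  + move/eqP; rewrite (eq_prim_root_expr pw) => /eqP; apply: mod_eq_small; lia.
- move=> j j0 jK; case: (j =P 0%N) => [E|_]; first by move: j0; rewrite E.
  by rewrite expf_eq0 (negbTE w0) andbF.
- move=> j j0 jK; case: (j =P 0%N) => [E|_]; first by move: j0; rewrite E.
  rewrite exprS [w * _]mulrC -{1}[w ^+ j]mulr1 -mulrDr mulf_eq0 expf_eq0 (negbTE w0) andbF /=.
  apply/negP => /eqP w1; have : w ^+ 2 == 1.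
    have wm : w = -1 by apply/eqP; rewrite -addr_eq0 addrC w1.
    by rewrite wm expr2 mulrNN mulr1.
  rewrite -(prim_order_dvd pw) => /dvdn_leq; lia.
Qed.

Lemma fam_odd (F : finFieldType) (I : finType) : 2 \notin [pchar F] ->
  (#|I| <= #|F|)%N -> ((#|I| <= 2)%N \/ (5 <= #|F|)%N) ->
  exists g : I -> F -> F, famP g.
Proof.
move=> odd2 IF h; have [c [c0 C1 C2 C3]] := chain_exists odd2 IF h.
pose sinj (k : I) := sig_inj C1 (ltn_ord (enum_rank k)).
exists (fun k => invF (sinj k)); split.
  by move=> k; apply: (can_inj (f_invF (sinj k))).
move=> k k' u u' nk E.
have -> : u = sig #|I| c (enum_rank k) (invF (sinj k) u) by rewrite f_invF.
have -> : u' = sig #|I| c (enum_rank k') (invF (sinj k) u) by rewrite E f_invF.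
apply: sig_row => //.
by apply: contra nk => /eqP /val_inj /enum_rank_inj ->.
Qed.
Definition Model (h : nat) := option (bool * 'I_h).
Definition negM h (A : Model h) : Model h :=
  if A is Some (s, j) then Some (~~ s, j) else None.

Lemma negMK h : involutive (@negM h).
Proof. by case => [[s j]|] //=; rewrite negbK. Qed.

Lemma card_Model h : #|{: Model h}| = (h.*2).+1.
Proof. by rewrite card_option card_prod card_bool card_ord mul2n. Qed.

Lemma odd_model (F : finFieldType) : 2 \notin [pchar F] ->
  exists h (enc : Model h -> F), [/\ bijective enc,
    forall A, enc (negM A) = - enc A & #|F| = (h.*2).+1].
Proof.
move=> odd2.
pose P := [set x : F | (x != 0) && (enum_rank x < enum_rank (- x))%N].
have Pnz x : x \in P -> x != 0 by rewrite inE => /andP[].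
have PN x : x \in P -> (- x) \notin P.
  rewrite !inE opprK => /andP[_ h]; apply/negP => /andP[_ h']; by have := ltn_trans h h'; rewrite ltnn.
have Pcov x : x != 0 -> (x \in P) || (- x \in P).
  move=> x0; rewrite !inE opprK oppr_eq0 x0 /=.
  have : enum_rank x != enum_rank (- x).
    apply: contra x0 => /eqP /enum_rank_inj E; apply/eqP/(double_eq0 odd2).
    by rewrite {1}E addNr.
  by move=> ne; rewrite -neq_ltn.
pose h := #|P|.
pose e (j : 'I_h) : F := enum_val j.
have eP j : e j \in P by exact: enum_valP.
pose enc (A : Model h) : F :=
  if A is Some (s, j) then (if s then e j else - e j) else 0.
have encN A : enc (negM A) = - enc A.
  by case: A => [[[] j]|] /=; rewrite ?opprK ?oppr0.
have encI : injective enc.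
  case => [[s j]|]; case => [[s' j']|] //=.
  - case: s; case: s' => /=.
    + by move/enum_val_inj ->.
    + by move=> E; have := PN _ (eP j'); rewrite -E eP.
    + by move=> E; have := PN _ (eP j); rewrite E eP.
    + by move/oppr_inj/enum_val_inj ->.
  - by case: s => /eqP; rewrite ?oppr_eq0 => /eqP E; have := Pnz _ (eP j); rewrite E eqxx.
  - by case: s' => /eqP; rewrite eq_sym ?oppr_eq0 => /eqP E; have := Pnz _ (eP j'); rewrite E eqxx.
have encS x : exists A, enc A = x.
  have [->|x0] := eqVneq x 0; first by exists None.
  case/orP: (Pcov x x0) => xP.
    by exists (Some (true, enum_rank_in xP x)); rewrite /= /e enum_rankK_in.
  exists (Some (false, enum_rank_in xP (- x))).
  by rewrite /= /e enum_rankK_in ?opprK.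
pose dec (x : F) : Model h := odflt None [pick A | enc A == x].
have decK : cancel dec enc.
  move=> x; rewrite /dec; case: pickP => [A /eqP //|none].
  by have [A EA] := encS x; have := none A; rewrite EA eqxx.
have encK : cancel enc dec by move=> A; apply: encI; rewrite decK.
have bij : bijective enc by exists dec.
by exists h, enc; split => //; rewrite -(bij_eq_card bij) card_Model.
Qed.
Section Design.
Variable m : nat.
Local Notation J := 'I_m.+2.
Local Notation M := (Model m.+2).

Lemma eqaddl (j k : J) : (j + k == j) = (k == 0).
Proof. by rewrite -subr_eq0 [j + k]addrC addrK. Qed.

Lemma one_neq0 : (1 : J) != 0.
Proof. exact: oner_neq0. Qed.

Definition cM (a b : M) : M :=
  match a, b with
  | None, _ => b
  | Some (true, j), None => Some (true, j)
  | Some (false, j), None => Some (false, j - 1)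
  | Some (true, j), Some (true, k) => Some (true, j)
  | Some (false, j), Some (true, k) => if k == 0 then None else Some (true, j + k)
  | Some (true, j), Some (false, k) => Some (false, j)
  | Some (false, j), Some (false, k) =>
      if k == 1 then None else Some (false, j + k - 1)
  end.

Definition iM (a b : M) : M :=
  match a, b with
  | None, _ => None
  | Some (false, j), Some (false, _) => Some (false, j)
  | Some (false, j), _ => Some (true, j)
  | Some (true, j), None => Some (true, j)
  | Some (true, j), Some (true, k) => Some (false, k)
  | Some (true, j), Some (false, k) =>
      if k == j + 1 then Some (false, j) else Some (true, k)
  end.

Definition decM (z t : M) : M * M :=
  match t with
  | None => (None, z)
  | Some (st, jt) =>
    match z with
    | None => if st then (Some (false, jt), Some (true, 0))
              else (Some (false, jt), Some (false, 1))
    | Some (true, i) =>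
        if st then (if jt == i then (Some (true, i), None)
                    else (Some (false, jt), Some (true, i - jt)))
        else (Some (true, i), Some (true, jt))
    | Some (false, i) =>
        if st then (if jt == i + 1 then (Some (false, jt), None)
                    else (Some (true, i), Some (false, jt)))
        else (if jt == i then (Some (true, i), Some (false, i + 1))
              else (Some (false, jt), Some (false, i - jt + 1)))
    end
  end.

Lemma decMK a b : decM (cM a b) (iM a b) = (a, b).
Proof.
case: a => [[[] j]|]; case: b => [[[] k]|] //=.
- case: (k =P j + 1) => [->|ne] /=; first by rewrite eqxx.
  by rewrite (introF eqP ne).
- by rewrite eqxx.
- case: (k =P 0) => [->|k0] //=.
  by rewrite eq_sym eqaddl (introF eqP k0) [j + k]addrC addrK.
- case: (k =P 1) => [->|k1] //=.
  rewrite eq_sym -addrA eqaddl subr_eq0 (introF eqP k1).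
  by rewrite [j + (k - 1)]addrC addrK subrK.
- by rewrite subrK eqxx.
Qed.

Lemma iM_inj a b a' b' : cM a b = cM a' b' -> iM a b = iM a' b' -> (a, b) = (a', b').
Proof. by move=> E1 E2; rewrite -decMK -[RHS]decMK E1 E2. Qed.

Definition rho (z : M) (j : J) : bool := if z is Some (_, i) then j == i else false.
Definition tau (z : M) (k : J) : bool := if z is Some (s, _) then s else k == 0.

Definition consA (z a : M) := if a is Some (s, j) then s == rho z j else true.
Definition consB (z b : M) := if b is Some (s, k) then s == tau z k else true.

Lemma cons_cM a b : consA (cM a b) a && consB (cM a b) b.
Proof.
case: a => [[[] j]|]; case: b => [[[] k]|] //=.
- by rewrite eqxx.
- by rewrite eqxx.
- by rewrite eqxx.
- case: (k =P 0) => [->|k0] /=; first by rewrite !eqxx.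
  by rewrite [j == _]eq_sym eqaddl (introF eqP k0).
- case: (k =P 1) => [->|k1] /=; first by rewrite (negbTE one_neq0).
  by rewrite [j == _]eq_sym -addrA eqaddl subr_eq0 (introF eqP k1).
- by rewrite [j == _]eq_sym eqaddl oppr_eq0 (negbTE one_neq0).
Qed.

Lemma cM_None_inj a a' : cM a None = cM a' None -> a = a'.
Proof.
case: a => [[[] j]|]; case: a' => [[[] k]|] //; rewrite /cM.
all: try (by case).
move=> /(congr1 (fun o : M => if o is Some (_, x) then x + 1 else 0)).
  by cbv beta iota; rewrite !subrK => ->.
Qed.

Lemma design a b a' b' : cM a b = cM a' b' -> (a, b) != (a', b') ->
  [/\ a' != negM a, b' != negM b & iM a b != iM a' b'].
Proof.
move=> E ne; split.
- apply/eqP => Ea; case: a Ea E ne => [[s j]|] Ea E ne; last first.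
    by move: E ne; rewrite Ea /= => ->; rewrite eqxx.
  have := cons_cM (Some (s, j)) b; have := cons_cM a' b'.
  rewrite -E Ea /= => /andP[/eqP h1 _] /andP[/eqP h2 _].
  by move: h1; rewrite -h2; case: (s).
- apply/eqP => Eb; case: b Eb E ne => [[s k]|] Eb E ne; last first.
    by move: E ne; rewrite Eb /= => /cM_None_inj ->; rewrite eqxx.
  have := cons_cM a (Some (s, k)); have := cons_cM a' b'.
  rewrite -E Eb /= => /andP[_ /eqP h1] /andP[_ /eqP h2].
  by move: h1; rewrite -h2; case: (s).
- by apply: contra ne => /eqP /(iM_inj E) ->.
Qed.

End Design.
Definition baseP (F0 F1 : finFieldType) (I : finType) (c : F0 -> F1 -> F1)
  (iota : F0 -> F1 -> I) := forall a b a' b', c a b = c a' b' -> (a, b) != (a', b') ->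
  [/\ a + a' != 0, b + b' != 0 & iota a b != iota a' b'].

Lemma char2_not3 (F : finFieldType) : 2 \in [pchar F] -> #|F| != 3%N.
Proof.
move=> c2; apply/negP => /eqP F3.
have [x /andP[x0 x1]] : exists x : F, (x != 0) && (x != 1).
  apply/existsP; apply: contraTT isT => /existsPn H.
  have : (#|F| <= #|[set (0%R : F); 1%R]|)%N.
    rewrite -cardsT; apply: subset_leq_card; apply/subsetP => y _.
    by have := H y; rewrite !inE negb_and !negbK.
  by rewrite cards2 F3; case: (_ != _).
have x2 : x * x = 1.
  have := expf_card x; rewrite F3 !exprS expr0 mulr1 => E.
  apply: (mulfI x0); rewrite mulr1; exact: E.
have xx : x + x = 0 by rewrite -mulr2n -mulr_natr (pcharf0 c2) mulr0.
have : (x + 1) * (x + 1) = 0.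
  rewrite mulrDl !mulrDr x2 mulr1 mul1r addrA -[1 + x + x]addrA xx addr0.
  by rewrite mulr1 -mulr2n -mulr_natr (pcharf0 c2) mulr0.
move/eqP; rewrite mulf_eq0 orbb addr_eq0 (oppr_pchar2 c2) => /eqP x1'.
by rewrite x1' eqxx in x1.
Qed.

Lemma odd_card (F : finFieldType) : 2 \notin [pchar F] ->
  odd #|F| /\ (3 <= #|F|)%N.
Proof.
move=> odd2; have [h [enc [_ _ hF]]] := odd_model odd2.
have := finNzRing_gt1 F; rewrite hF; split; first by rewrite /= odd_double.
by move: H; rewrite -addnn; lia.
Qed.

Lemma odd_of_hyp (F : finFieldType) : (exists p, p \in [pchar F] /\ odd p) ->
  2 \notin [pchar F].
Proof.
case=> p [pc op]; rewrite (pcharf_eq pc); apply/negP => /eqP E.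
by rewrite -E in op.
Qed.

Lemma fam_any (F : finFieldType) (I : finType) : (#|I| <= #|F|)%N ->
  (2 \in [pchar F] \/ (#|I| <= 2)%N \/ (5 <= #|F|)%N) ->
  exists g : I -> F -> F, famP g.
Proof.
move=> IF h; case c2: (2 \in [pchar F]); first exact: fam_char2.
apply: fam_odd; rewrite ?c2 //; case: h => [|//]; by rewrite c2.
Qed.

Lemma base_char2 (F0 F1 : finFieldType) : 2 \in [pchar F0] -> (#|F0| <= #|F1|)%N ->
  (2 \in [pchar F1] \/ (#|F0| <= 2)%N \/ (5 <= #|F1|)%N) ->
  exists (I : finType) (c : F0 -> F1 -> F1) (iota : F0 -> F1 -> I),
    #|I| = #|F0| /\ baseP c iota.
Proof.
move=> c2 le h; have [g [ginj grow]] := fam_any le h.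
exists F0, g, (fun a _ => a); split => // a b a' b' E ne.
have aa : a != a'.
  apply: contra ne => /eqP ea; move: E; rewrite ea => /ginj ->; exact: eqxx.
split => //; last by apply: grow aa E.
apply: contra aa; rewrite addr_eq0 (oppr_pchar2 c2) => /eqP ->; exact: eqxx.
Qed.

Definition embM h h' (le : (h <= h')%N) (A : Model h) : Model h' :=
  if A is Some (s, j) then Some (s, widen_ord le j) else None.

Lemma embM_inj h h' (le : (h <= h')%N) : injective (embM le).
Proof.
case=> [[s j]|]; case=> [[s' j']|] //= [-> E]; congr (Some (_, _)).
exact: val_inj E.
Qed.

Lemma embMN h h' (le : (h <= h')%N) A : embM le (negM A) = negM (embM le A).
Proof. by case: A => [[s j]|]. Qed.

Lemma base_odd (F0 F1 : finFieldType) : 2 \notin [pchar F0] -> 2 \notin [pchar F1] ->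
  (#|F0| <= #|F1|)%N -> (5 <= #|F1|)%N ->
  exists (I : finType) (c : F0 -> F1 -> F1) (iota : F0 -> F1 -> I),
    #|I| = #|F1| /\ baseP c iota.
Proof.
move=> o0 o1 le F5.
have [h0 [enc0 [[dec0 e0K d0K] enc0N c0]]] := odd_model o0.
have [h1 [enc1 [[dec1 e1K d1K] enc1N c1]]] := odd_model o1.
have le01 : (h0 <= h1)%N by move: le; rewrite c0 c1 -!addnn; lia.
case: h1 enc1 dec1 e1K d1K enc1N c1 le01 => [|[|m]] enc1 dec1 e1K d1K enc1N c1 le01;
  try (by move: F5; rewrite c1).
have dec0N a : dec0 (- a) = negM (dec0 a).
  by rewrite -{1}(d0K a) -enc0N e0K.
have dec1N b : dec1 (- b) = negM (dec1 b).
  by rewrite -{1}(d1K b) -enc1N e1K.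
pose A a := embM le01 (dec0 a).
have Ainj : injective A by move=> x y /embM_inj /(can_inj d0K).
have AN a : A (- a) = negM (A a) by rewrite /A dec0N embMN.
exists (Model m.+2), (fun a b => enc1 (cM (A a) (dec1 b))), (fun a b => iM (A a) (dec1 b)).
split; first by rewrite card_Model c1.
move=> a b a' b' /(can_inj e1K) E ne.
have ne' : (A a, dec1 b) != (A a', dec1 b').
  apply: contra ne => /eqP [/Ainj -> /(can_inj d1K) ->]; exact: eqxx.
have [na nb ni] := design E ne'; split => //.
- apply: contra na; rewrite addrC addr_eq0 => /eqP ->; by rewrite AN.
- apply: contra nb; rewrite addrC addr_eq0 => /eqP ->; by rewrite dec1N.
Qed.
Section Z3.
Variable (F : finFieldType).
Hypothesis F3 : #|F| = 3%N.

Lemma p3F : 3%N \in [pchar F].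
Proof. by apply: (card_finPcharP (n := 1)); rewrite ?F3. Qed.

Definition psi (k : 'Z_3) : F := (val k)%:R.

Lemma psiD k l : psi (k + l) = psi k + psi l.
Proof.
rewrite /psi -natrD -(GRing.natr_mod_pchar p3F (val k + val l)).
by case: k l => [k kp] [l lp].
Qed.

Lemma psiM k l : psi (k * l) = psi k * psi l.
Proof.
rewrite /psi -natrM -(GRing.natr_mod_pchar p3F (val k * val l)).
by case: k l => [k kp] [l lp].
Qed.

Lemma psi1 : psi 1 = 1. Proof. by []. Qed.
Lemma psi0 : psi 0 = 0. Proof. by []. Qed.

Lemma psi_inj : injective psi.
Proof.
move=> k l; rewrite /psi => E; apply: val_inj.
wlog kl : k l E / (val k <= val l)%N.
  move=> H; case: (leqP (val k) (val l)) => h; first exact: H.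
  by apply/esym/H => //; apply: ltnW.
move/eqP: E; rewrite eq_sym -subr_eq0 -natrB // -(dvdn_pcharf p3F) => /dvdn_leq.
have ka : (val k < 3)%N := ltn_ord k; have la : (val l < 3)%N := ltn_ord l.
move=> H; lia.
Qed.

Lemma psi_bij : bijective psi.
Proof. by apply: (inj_card_bij psi_inj); rewrite F3 card_ord. Qed.

End Z3.

Lemma Z3_iso (F0 F1 : finFieldType) : #|F0| = 3%N -> #|F1| = 3%N ->
  exists f : {rmorphism (F0 * F1)%type -> ('Z_3 * 'Z_3)%type}, bijective f.
Proof.
move=> h0 h1.
have [phi0 p0K K0] := psi_bij h0; have [phi1 p1K K1] := psi_bij h1.
have phiD (G : finFieldType) (hG : #|G| = 3%N) (phi : G -> 'Z_3) :
    cancel (psi G) phi -> cancel phi (psi G) ->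
    (forall x y, phi (x + y) = phi x + phi y) /\ (forall x y, phi (x * y) = phi x * phi y)
    /\ phi 0 = 0 /\ phi 1 = 1.
  move=> K1' K2'; split; [|split; [|split]].
  - by move=> x y; rewrite -{1}(K2' x) -{1}(K2' y) -(psiD hG) K1'.
  - by move=> x y; rewrite -{1}(K2' x) -{1}(K2' y) -(psiM hG) K1'.
  - by rewrite -(psi0 G) K1'.
  - by rewrite -(psi1 G) K1'.
have [D0 [M0 [Z0 O0]]] := phiD _ h0 _ p0K K0.
have [D1 [M1 [Z1 O1]]] := phiD _ h1 _ p1K K1.
pose f (x : F0 * F1) : ('Z_3 * 'Z_3)%type := (phi0 x.1, phi1 x.2).
have fN : nmod_morphism f.
  split; first by rewrite /f /= Z0 Z1.
  by move=> [x1 x2] [y1 y2]; rewrite /f /= D0 D1.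
have fM : monoid_morphism f.
  split; first by rewrite /f /= O0 O1.
  by move=> [x1 x2] [y1 y2]; rewrite /f /= M0 M1.
pose fR : {rmorphism (F0 * F1)%type -> ('Z_3 * 'Z_3)%type} :=
  HB.pack f (GRing.isNmodMorphism.Build _ _ f fN) (GRing.isMonoidMorphism.Build _ _ f fM).
exists fR.
exists (fun z => (psi F0 z.1, psi F1 z.2)) => [[x1 x2]|[z1 z2]] /=.
  by rewrite /= K0 K1.
by change (f (psi F0 z1, psi F1 z2) = (z1, z2)); rewrite /f /= p0K p1K.
Qed.
Lemma cond_char2 (F0 G : finFieldType) : 2 \in [pchar F0] -> (#|F0| <= #|G|)%N ->
  2 \in [pchar G] \/ (#|F0| <= 2)%N \/ (5 <= #|G|)%N.
Proof.
move=> c2 le; case cG: (2 \in [pchar G]); first by left.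
have [oG g3] := odd_card (negbT cG); right.
case: (leqP #|F0| 2) => h; first by left.
case: (leqP 5 #|G|) => h'; first by right.
have G3 : #|G| = 3%N.
  move: oG h' g3; case: #|G| => [|[|[|[|[|k]]]]] //=.
have := char2_not3 c2; rewrite (_ : #|F0| = 3%N) //; lia.
Qed.

Theorem lemma12 (n : nat) (hn : (1 < n)%N) (F : 'I_n -> finFieldType)
  (hsize : forall i j : 'I_n, (i <= j)%N -> (#|F i| <= #|F j|)%N)
  (hcase :
     (2 \in [pchar (F (Ordinal (ltnW hn)))])%N
     \/ ((forall i : 'I_n, exists p : nat, p \in [pchar (F i)] /\ odd p)
         /\ ~ (exists f : {rmorphism (F (Ordinal (ltnW hn)) * F (Ordinal hn))%type
                                 -> ('Z_3 * 'Z_3)%type}, bijective f))) :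
  chi_total F = (\prod_(i < n | (0 < i)%N) #|F i|)%N.
Proof.
set i0 := Ordinal (ltnW hn) in hcase *; set i1 := Ordinal hn in hcase *.
have ne01 : i0 != i1 by [].
have cardS : #|Sset F i0| = (\prod_(i < n | (0 < i)%N) #|F i|)%N.
  rewrite card_Sset; apply: eq_bigl => i; by rewrite -val_eqE /= lt0n.
rewrite -cardS.
have main : forall (I : finType) (c : F i0 -> F i1 -> F i1) (iota : F i0 -> F i1 -> I),
    baseP c iota ->
    (forall i : 'I_n, i != i0 -> i != i1 -> exists g : I -> F i -> F i, famP g) ->
    chi_total F = #|Sset F i0|.
  move=> I c iota Hc Hg.
  have : forall i : 'I_n, exists g : I -> F i -> F i, i != i0 -> i != i1 -> famP g.
    move=> i; case: (eqVneq i i0) => [_|h0].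
      by exists (fun _ u => u).
    case: (eqVneq i i1) => [_|h1]; first by exists (fun _ u => u).
    by have [g Hg'] := Hg i h0 h1; exists g.
  case/fin_all_exists => g Hg'.
  exact: (chi_combine ne01 Hc Hg').
have big i : i != i0 -> i != i1 -> (1 < i)%N.
  by rewrite -!val_eqE /=; lia.
case: hcase => [c2|[oall noiso]].
- have [I [c [iota [cI Hc]]]] := base_char2 c2 (hsize i0 i1 isT)
    (cond_char2 c2 (hsize i0 i1 isT)).
  apply: (main I c iota Hc) => i h0 h1.
  have le : (#|F i0| <= #|F i|)%N by apply: hsize.
  apply: fam_any; rewrite cI //; exact: cond_char2.
- have o i := odd_of_hyp (oall i).
  have F5 : (5 <= #|F i1|)%N.
    case: (leqP 5 #|F i1|) => // h; case: noiso.
    have [o1 g1] := odd_card (o i1); have [o0 g0] := odd_card (o i0).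
    have le := hsize i0 i1 isT.
    have F13 : #|F i1| = 3%N by move: o1 h g1; case: #|F i1| => [|[|[|[|[|k]]]]].
    have F03 : #|F i0| = 3%N by move: le; rewrite F13; lia.
    exact: Z3_iso.
  have [I [c [iota [cI Hc]]]] := base_odd (o i0) (o i1) (hsize i0 i1 isT) F5.
  apply: (main I c iota Hc) => i h0 h1.
  have le : (#|F i1| <= #|F i|)%N by apply: hsize; have := big i h0 h1; rewrite /i1 /=; lia.
  apply: fam_any; rewrite cI //; right; right; lia.
Qed.
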